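(* Let $G$ be a bipartite graph, $M$ a matching of $G$, $C$ an $M$-cycle or an $M$-path of $G$, and $x,y$ two vertices of $G - V(C)$ lying in different partite sets of $G$. (1) If $C$ is a cycle and $e_G(\{x,y\}, V(C)) \ge \frac{|C|}{2}+1$, then there is an edge $uv \in E(C)\setminus M$ with $e_G(\{x,y\},\{u,v\}) = 2$. (2) If $C$ is a path and $e_G(\{x,y\}, V(C)) \ge \frac{|C|}{2}+2$, then there is an edge $uv \in E(C)\setminus M$ with $e_G(\{x,y\},\{u,v\}) = 2$.
   Context: Graphs are finite and simple. A cycle $C$ is an $M$-cycle if $|E(C)\cap M|=|C|/2$. An $M$-path is a path whose edges alternate between edges of $M$ and edges not in $M$, beginning and ending with edges of $M$. $|C|$ is the number of vertices; $e_G(S,T)$ is the number of edges between disjoint vertex sets $S$ and $T$. *)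

(* Defs.v *)
From mathcomp Require Import all_boot.
Set Implicit Arguments. Unset Strict Implicit. Unset Printing Implicit Defensive.

Section Graphs.
Variable T : finType.

Definition simple_graph (g : rel T) : Prop :=
  symmetric g /\ irreflexive g.

(* A is one partite set of a bipartition of g (the other is ~: A) *)
Definition bipartition (g : rel T) (A : {set T}) : Prop :=
  forall u v, g u v -> (u \in A) != (v \in A).

(* edges are represented as 2-element vertex sets [set u; v] *)
Definition matching (g : rel T) (M : {set {set T}}) : Prop :=
  (forall m, m \in M -> exists u v, g u v /\ m = [set u; v]) /\
  (forall m1 m2, m1 \in M -> m2 \in M -> m1 != m2 -> [disjoint m1 & m2]).

(* e_G(S, U): number of edges between (disjoint) vertex sets S and U *)
Definition eG (g : rel T) (S U : {set T}) : nat :=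
  #|[set p : T * T | [&& p.1 \in S, p.2 \in U & g p.1 p.2]]|.

Definition is_cycle (g : rel T) (c : seq T) : Prop :=
  [/\ uniq c, 3 <= size c & cycle g c].

Definition cycle_edges (c : seq T) : {set {set T}} :=
  [set [set p.1; p.2] | p in zip c (rot 1 c)].

Definition M_cycle (g : rel T) (M : {set {set T}}) (c : seq T) : Prop :=
  is_cycle g c /\ #|cycle_edges c :&: M| = size c %/ 2.

Definition is_path (g : rel T) (p : seq T) : Prop :=
  [/\ uniq p, 2 <= size p & sorted g p].

Definition path_edge_seq (p : seq T) : seq {set T} :=
  [seq [set q.1; q.2] | q <- zip p (behead p)].

Definition path_edges (p : seq T) : {set {set T}} :=
  [set e in path_edge_seq p].

(* M-path: edges alternate M / non-M, first and last edge in M *)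
Definition M_path (g : rel T) (M : {set {set T}}) (p : seq T) : Prop :=
  [/\ is_path g p,
      (forall i, i < size (path_edge_seq p) ->
         (nth set0 (path_edge_seq p) i \in M) = ~~ odd i)
    & odd (size (path_edge_seq p))].

End Graphs.

(* Main.v *)
Require Import Defs.
From mathcomp Require Import all_boot zify.

Section Aux.
Variable T : finType.

Lemma eG_sum (g : rel T) (x y : T) (S : {set T}) : x != y ->
  eG g [set x; y] S = \sum_(t in S) ((g x t : nat) + g y t).
Proof.
move=> xy; rewrite /eG -sum1_card.
rewrite (eq_bigl (fun p : T * T => (p.1 \in [set x; y]) && ((p.2 \in S) && g p.1 p.2))); last first.
  by move=> p; rewrite inE.
rewrite -(pair_big_dep (fun a => a \in [set x; y]) (fun a b => (b \in S) && g a b) (fun _ _ => 1)) /=.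
rewrite big_setU1 /=; last by rewrite inE.
rewrite big_set1 big_split /= !big_mkcondr /=.
by congr (_ + _); apply: eq_bigr => t _; case: (g _ t).
Qed.

Lemma sum_pairs (k : nat) (f : nat -> nat) :
  k < \sum_(0 <= i < k.*2) f i -> exists i, i < k /\ 2 <= f i.*2 + f i.*2.+1.
Proof.
elim: k => [|k IH]; first by rewrite big_geq.
rewrite doubleS !big_nat_recr //= -addnA.
case: (leqP 2 (f k.*2 + f k.*2.+1)) => H.
  by move=> _; exists k.
move=> H2; have [i [Hi Hf]] : exists i, i < k /\ 2 <= f i.*2 + f i.*2.+1.
  by apply: IH; lia.
by exists i; split => //; lia.
Qed.

Lemma path_side (g : rel T) (A : {set T}) : bipartition g A ->
  forall a q, path g a q -> (last a q \in A) = (a \in A) (+) odd (size q).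
Proof.
move=> bip a q; elim: q a => [|b q IH] a /=; first by rewrite addbF.
case/andP=> gab pq; rewrite IH //.
move: (bip _ _ gab); case: (a \in A); case: (b \in A); case: (odd (size q)) => //.
Qed.

Lemma inj_arith n i j ni nj : 2 < n -> i < n -> j < n ->
  ((ni = i.+1 /\ i.+1 < n) \/ (ni = 0 /\ i.+1 = n)) ->
  ((nj = j.+1 /\ j.+1 < n) \/ (nj = 0 /\ j.+1 = n)) ->
  (i = j \/ i = nj) -> (ni = j \/ ni = nj) -> i = j.
Proof. lia. Qed.

End Aux.

Theorem lemma3 (T : finType) (g : rel T) (A : {set T}) (M : {set {set T}})
    (c : seq T) (x y : T) :
  simple_graph g -> bipartition g A -> matching g M ->
  x \notin c -> y \notin c -> (x \in A) != (y \in A) ->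
  (M_cycle g M c ->
     size c %/ 2 + 1 <= eG g [set x; y] [set v in c] ->
     exists u v, [set u; v] \in cycle_edges c :\: M /\
                 eG g [set x; y] [set u; v] = 2) /\
  (M_path g M c ->
     size c %/ 2 + 2 <= eG g [set x; y] [set v in c] ->
     exists u v, [set u; v] \in path_edges c :\: M /\
                 eG g [set x; y] [set u; v] = 2).
Proof.
move=> [gsym girr] bip [Mg Mdisj] xc yc xyA.
have xy : x != y by apply: contraNneq xyA => ->.
pose w t := (g x t : nat) + g y t.
have w1 : forall t, w t <= 1.
  move=> t; rewrite /w; case gx: (g x t); case gy: (g y t) => //.
  move: (bip _ _ gx) (bip _ _ gy) xyA.
  by case: (x \in A); case: (y \in A); case: (t \in A).
have phi2 : forall u v, u != v -> \sum_(t in [set u; v]) w t = w u + w v.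
  move=> u v uv; rewrite big_setU1 ?big_set1 ?inE //.
have phile : forall e : {set T}, \sum_(t in e) w t <= #|e|.
  move=> e; rewrite -sum1_card; apply: leq_sum => t _; exact: w1.
have Ew : forall S, eG g [set x; y] S = \sum_(t in S) w t.
  by move=> S; rewrite eG_sum.
split.
  move=> [[uc sz3 cyc] HM] HE.
  case: c uc sz3 cyc HM HE xc yc => [|a p] // uc sz3 cyc HM HE xc yc.
  have evn : ~~ odd (size p).+1.
    have := @path_side T g A bip a _ cyc; rewrite last_rcons size_rcons.
    by case: (a \in A); case: (odd _).
  set c := a :: p.
  have szc : size c = (size p).+1 by [].
  set n := size c.
  set k := n./2.
  have on : odd n = false by exact: negbTE evn.
  have nk : n = k.*2 by rewrite -[n]odd_double_half on.
  pose nxt i := if i < size p then i.+1 else 0.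
  have nxtlt : forall i, i < n -> nxt i < n by move=> i; rewrite /nxt; case: ifP; clear -szc; lia.
  have up : uniq c := uc.
  have nI : forall i, i < n -> (nxt i = i.+1 /\ i.+1 < n) \/ (nxt i = 0 /\ i.+1 = n).
    by move=> i Hi; rewrite /nxt; case: ltnP => h; [left | right]; clear -szc h Hi; lia.
  have Hne : forall i, i < n -> nth a c i != nth a c (nxt i).
    move=> i Hi; rewrite nth_uniq //; last exact: nxtlt.
    rewrite /nxt; move: Hi sz3; rewrite /n szc /= => Hi sz3'; case: ltnP => h; apply/eqP; clear -h Hi sz3'; lia.
  have Hrot : forall i, i < n -> nth a (rot 1 c) i = nth a c (nxt i).
    move=> i Hi; rewrite /c rot1_cons nth_rcons /nxt.
    case: ltnP => h //; have /eqP -> : i == size p by clear -szc h Hi; lia.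
    by rewrite eqxx.
  have Hzip : forall i, i < n -> nth (a, a) (zip c (rot 1 c)) i = (nth a c i, nth a c (nxt i)).
    by move=> i Hi; rewrite nth_zip ?size_rot // Hrot.
  pose e (i : 'I_n) := [set nth a c i; nth a c (nxt i)].
  have CEe : cycle_edges c = [set e i | i in 'I_n].
    apply/setP => E0; apply/imsetP/imsetP => [[q qin ->] | [i _ ->]].
      have [j Hj <-] := nthP (a, a) qin.
      have Hj' : j < n by move: Hj; rewrite size_zip size_rot minnn.
      by exists (Ordinal Hj'); rewrite // Hzip.
    exists (nth (a, a) (zip c (rot 1 c)) i); last by rewrite Hzip.
    by apply: mem_nth; rewrite size_zip size_rot minnn.
  have einj : {in 'I_n &, injective e}.
    move=> i j _ _ Heq; apply: val_inj => /=.
    have h1 : nth a c i \in e j by rewrite -Heq !inE eqxx.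
    have h2 : nth a c (nxt i) \in e j by rewrite -Heq !inE eqxx orbT.
    have ilt := ltn_ord i; have jlt := ltn_ord j.
    have nilt := nxtlt _ ilt; have njlt := nxtlt _ jlt.
    move: h1 h2; rewrite !inE !nth_uniq // => /orP h1 /orP h2.
    apply: (@inj_arith n) => //.
    - exact: nI.
    - exact: nI.
    - by case: h1 => /eqP ->; [left | right].
    - by case: h2 => /eqP ->; [left | right].
  rewrite CEe in HM *.
  set CE := [set e i | i in 'I_n] in HM *.
  have Ec : \sum_(t in [set v in c]) w t = \sum_(t <- c) w t.
    rewrite big_uniq //; apply: eq_bigl => t; by rewrite inE.
  rewrite Ew Ec in HE.
  have Hall : \sum_(E0 in CE) \sum_(t in E0) w t = (\sum_(t <- c) w t).*2.
    rewrite big_imset //= -addnn.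
    rewrite (eq_bigr (fun i : 'I_n => w (nth a c i) + w (nth a (rot 1 c) i))); last first.
      by move=> i _; rewrite phi2 ?Hrot //; apply: Hne.
    rewrite big_split /=; congr (_ + _).
      by rewrite (big_nth a) big_mkord; apply: eq_bigl.
    by rewrite -(perm_big _ (_ : perm_eq (rot 1 c) c)) ?perm_rot // (big_nth a) size_rot big_mkord; apply: eq_bigl.
  have HMs : \sum_(E0 in CE :&: M) \sum_(t in E0) w t <= \sum_(t <- c) w t.
    rewrite -big_trivIset; last first.
      apply/trivIsetP => A1 B1; rewrite !inE => /andP[_ h1] /andP[_ h2]; exact: Mdisj.
    have sub : cover (CE :&: M) \subset [set v in c].
      apply/subsetP => t /bigcupP [E0 /setIP [/imsetP [i _ ->] _]].
      rewrite /e in_set2 => /orP [] /eqP ->; rewrite in_set; apply: mem_nth => //; exact: nxtlt.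
    by rewrite -Ec (big_setID (cover (CE :&: M)) (A := [set v in c])) (setIidPr sub) leq_addr.
  have Hcard : #|CE :\: M| <= k.
    rewrite cardsD HM -/n.
    have k2 : size (a :: p) %/ 2 = k by rewrite divn2.
    rewrite k2.
    have hc : #|CE| <= n by apply: leq_trans (leq_imset_card _ _) _; rewrite card_ord.
    clear -hc nk; lia.
  have Hsplit : \sum_(E0 in CE) \sum_(t in E0) w t = \sum_(E0 in CE :&: M) \sum_(t in E0) w t + \sum_(E0 in CE :\: M) \sum_(t in E0) w t.
    exact: big_setID.
  rewrite Hall in Hsplit.
  have [E0 E0in HE0] : exists2 E0, E0 \in CE :\: M & 1 < \sum_(t in E0) w t.
    case: (boolP [exists E1 in CE :\: M, 1 < \sum_(t in E1) w t]) => [/exists_inP // | /exists_inPn H]; exfalso.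
    have : \sum_(E0 in CE :\: M) \sum_(t in E0) w t <= #|CE :\: M|.
      rewrite -sum1_card; apply: leq_sum => E1 /H; by rewrite -leqNgt.
    have k2 : size (a :: p) %/ 2 = k by rewrite divn2.
    move: HE; rewrite k2; clear -Hsplit HMs Hcard; lia.
  have E0in' := E0in.
  move: E0in'; rewrite inE => /andP [nM /imsetP [i _ Ei]].
  exists (nth a c i), (nth a c (nxt i)); split; first by rewrite -[X in X \in _]/(e i) -Ei.
  rewrite Ew; move: HE0 (phile E0); rewrite Ei /e cards2 Hne //= => h1 h2; apply/eqP; by rewrite eqn_leq h1 h2.
move=> [[uc sz2 srt] Hnth oddn] HE.
case: c uc sz2 srt Hnth oddn HE xc yc => [|a p] // uc sz2 srt Hnth oddn HE xc yc.
have szpe : size (path_edge_seq (a :: p)) = size p.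
  by rewrite /path_edge_seq size_map size_zip /= minnE; clear -xy; lia.
rewrite szpe in oddn Hnth.
set k := (size p)./2.
have szp : size p = k.*2.+1 by rewrite -[size p]odd_double_half oddn add1n.
have Ec : \sum_(t in [set v in a :: p]) w t = \sum_(0 <= i < size (a :: p)) w (nth a (a :: p) i).
  rewrite -(big_nth a xpredT w) big_uniq //; apply: eq_bigl => t; by rewrite inE.
rewrite Ew Ec /= in HE. move: HE; rewrite szp big_nat_recl // big_nat_recr //= => HE.
have Hs : k < \sum_(0 <= i < k.*2) w (nth a p i).
  move: (w1 a) (w1 (nth a p k.*2)) HE; rewrite /=.
  have -> : (k.*2.+2 %/ 2) = k.+1 by rewrite -doubleS -muln2 mulnK.
  clear -xy; lia.
have [i [Hi Hw]] := @sum_pairs k (fun i => w (nth a p i)) Hs.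
exists (nth a p i.*2), (nth a p i.*2.+1).
have ne : nth a p i.*2 != nth a p i.*2.+1.
  have up : uniq p by case/andP: uc.
  rewrite nth_uniq // ?szp ?(gtn_eqF (ltnSn _)) //; clear -Hi szp; lia.
have He : [set nth a p i.*2; nth a p i.*2.+1] = nth set0 (path_edge_seq (a :: p)) i.*2.+1.
  rewrite /path_edge_seq (nth_map (a, a)); last by rewrite size_zip /= minnE; clear -Hi szp; lia.
  rewrite nth_zip_cond size_zip /= ifT //; rewrite minnE; clear -Hi szp; lia.
split.
  rewrite He inE Hnth; last by clear -Hi szp; lia.
  rewrite /= odd_double /= /path_edges inE mem_nth // szpe; clear -Hi szp; lia.
rewrite Ew phi2 //.
move: (w1 (nth a p i.*2)) (w1 (nth a p i.*2.+1)) Hw; clear -xy; lia.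
Qed.
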